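(* Let $\mathcal{STAB}$ be the set of channels $\rho\mapsto U\rho U^\dagger$ with $U$ an element of the $n$-qubit Clifford group. Then there is a function $\eta(n)\to0$ as $n\to\infty$ such that for every $m$ and every sample $S=(z_1,\ldots,z_m)$ with $z_i\in\mathbb{F}_2^n\times\mathbb{F}_2^n$, \[ \hat{R}_S(\mathcal{F}(\mathcal{STAB}))\le 4\,\frac{(1+\eta(n))\,n}{\sqrt m}\,\max_{\Phi\in\mathcal{STAB}}\|\vec f_\Phi\|_\infty, \] where $\vec f_\Phi=(f_\Phi(z_1),\ldots,f_\Phi(z_m))$.
   Context: For a channel $\Phi$ on $n$ qubits, $f_\Phi(x,y)=\mathrm{Tr}[\Phi(|x\rangle\langle x|)\,|y\rangle\langle y|]$ for $x,y\in\mathbb{F}_2^n$; $\mathcal{F}(\Omega)=\{f_\Phi:\Phi\in\Omega\}$. Empirical Rademacher complexity: $\hat{R}_S(\mathcal{G})=\mathbb{E}_{\epsilon}[\sup_{g\in\mathcal{G}}\frac1m\sum_i\epsilon_i g(z_i)]$, $\epsilon_i$ i.i.d. uniform on $\{\pm1\}$. *)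

(* Defs.v *)
From HB Require Import structures.
From mathcomp Require Import all_boot all_order all_algebra.
From mathcomp Require Import complex.
From mathcomp Require Import all_classical all_reals all_analysis.
Set Implicit Arguments. Unset Strict Implicit. Unset Printing Implicit Defensive.
Import Order.TTheory GRing.Theory Num.Theory.
Local Open Scope ring_scope.
Local Open Scope classical_set_scope.

Section Quantum.
Variable R : realType.
Local Notation C := (complex R).

(* computational basis labels of n qubits: F_2^n as bit vectors *)
Definition qubits (n : nat) : finType := {ffun 'I_n -> bool}.

(* operators on (C^2)^{⊗n}, as matrices indexed by basis labels *)
Definition op (n : nat) := qubits n -> qubits n -> C.

Definition opmul n (A B : op n) : op n := fun x y => \sum_k A x k * B k y.
Definition opadj n (A : op n) : op n := fun x y => conjc (A y x).
Definition opid n : op n := fun x y => (x == y)%:R.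
Definition opscale n (c : C) (A : op n) : op n := fun x y => c * A x y.
Definition optrace n (A : op n) : C := \sum_x A x x.
Definition proj n (x : qubits n) : op n := fun u v => ((u == x) && (v == x))%:R.

Definition unitary n (U : op n) :=
  opmul U (opadj U) = @opid n /\ opmul (opadj U) U = @opid n.

Definition bxor n (a b : qubits n) : qubits n := [ffun i => a i (+) b i].
Definition bdot n (a b : qubits n) : nat := \sum_i (a i && b i).

(* the Pauli string X^a Z^b : |y> |-> (-1)^{b.y} |y xor a> *)
Definition pauli n (a b : qubits n) : op n :=
  fun x y => if x == bxor y a then (-1) ^+ bdot b y else 0.

(* n-qubit Clifford group: unitaries normalizing the Pauli group
   { i^k X^a Z^b } under conjugation *)
Definition clifford n (U : op n) :=
  unitary U /\
  forall a b : qubits n, exists (c d : qubits n) (k : 'I_4),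
    opmul (opmul U (pauli a b)) (opadj U) = opscale ('i ^+ k) (pauli c d).

Definition channel n := op n -> op n.

Definition STAB n : set (channel n) :=
  [set Phi | exists U, clifford U /\ Phi = fun rho => opmul (opmul U rho) (opadj U)].

(* f_Phi(x,y) = Tr[Phi(|x><x|) |y><y|] (real part; the trace is real) *)
Definition fPhi n (Phi : channel n) (z : qubits n * qubits n) : R :=
  complex.Re (optrace (opmul (Phi (proj z.1)) (proj z.2))).

Definition Fset n (Omega : set (channel n)) : set (qubits n * qubits n -> R) :=
  [set fPhi Phi | Phi in Omega].

End Quantum.

(* empirical Rademacher complexity: expectation over eps uniform in {+-1}^m
   (eps i = (-1)^(b i) for b : {ffun 'I_m -> bool}) of the supremum *)
Definition sgnb (R : realType) (b : bool) : R := if b then -1 else 1.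

Definition empRad (R : realType) (Z : Type) (m : nat) (S : 'I_m -> Z)
  (G : set (Z -> R)) : R :=
  (2 ^+ m)^-1 * \sum_(b : {ffun 'I_m -> bool})
     sup [set (m%:R^-1 * \sum_i sgnb R (b i) * g (S i)) | g in G].

Definition vinf (R : realType) (Z : Type) (m : nat) (S : 'I_m -> Z) (f : Z -> R) : R :=
  \big[Num.max/0]_i `|f (S i)|.

(* Main.v *)
Require Import Defs.
From HB Require Import structures.
From mathcomp Require Import all_boot all_order all_algebra.
From mathcomp Require Import complex.
From mathcomp Require Import all_classical all_reals all_analysis.
From mathcomp Require Import ring lra.
Import Order.TTheory GRing.Theory Num.Theory.
Local Open Scope ring_scope.
Local Open Scope classical_set_scope.
Section Massart.
Variable R : realType.

Lemma cosh_le (y : R) : (expR y + expR (- y)) / 2 <= expR (2 * y ^+ 2).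
Proof.
have hy1 := expR_ge1Dx y; have hy2 := expR_ge1Dx (- y).
have hp1 := expR_gt0 y; have hp2 := expR_gt0 (- y).
have hab : expR y * expR (- y) = 1 by rewrite -expRD subrr expR0.
have [hs|hs] := leP (y ^+ 2) (2^-1).
  have h2 := expR_ge1Dx (2 * y ^+ 2).
  apply: le_trans h2.
  have h1y : 0 < 1 - y ^+ 2 by lra.
  have yb1 : y < 1 by nra.
  have yb2 : -1 < y by nra.
  have e1 : expR y * (1 - y) <= 1.
    by rewrite -hab; apply: ler_wpM2l; [exact: ltW|lra].
  have e2 : expR (- y) * (1 + y) <= 1.
    by rewrite -hab mulrC; apply: ler_wpM2r; [exact: ltW|lra].
  have e3 : (expR y + expR (- y)) * (1 - y ^+ 2) <= 2.
    have -> : (expR y + expR (- y)) * (1 - y ^+ 2) =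
       expR y * (1 - y) * (1 + y) + expR (- y) * (1 + y) * (1 - y) by ring.
    have ha : expR y * (1 - y) * (1 + y) <= 1 + y.
      by rewrite -[X in _ <= X]mul1r; apply: ler_wpM2r; [lra|].
    have hb : expR (- y) * (1 + y) * (1 - y) <= 1 - y.
      by rewrite -[X in _ <= X]mul1r; apply: ler_wpM2r; [lra|].
    lra.
  have e4 : 2 <= (2 + 4 * y ^+ 2) * (1 - y ^+ 2).
    have : 0 <= y ^+ 2 * (1 - 2 * y ^+ 2) by apply: mulr_ge0; [exact: sqr_ge0|lra].
    nra.
  have e5 : expR y + expR (- y) <= 2 + 4 * y ^+ 2.
    by rewrite -(ler_pM2r h1y); apply: le_trans e4.
  lra.
have ya : `|y| <= 2 * y ^+ 2.
  have h : 2^-1 < `|y| ^+ 2 by rewrite real_normK ?num_real.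
  rewrite -[y ^+ 2](real_normK (num_real y)).
  have h0 := normr_ge0 y.
  have h1 : 2^-1 <= `|y| by nra.
  nra.
have k1 : expR y <= expR (2 * y ^+ 2).
  by rewrite ler_expR; apply: le_trans ya; exact: ler_norm.
have k2 : expR (- y) <= expR (2 * y ^+ 2).
  by rewrite ler_expR; apply: le_trans ya; rewrite -normrN; exact: ler_norm.
lra.
Qed.


Lemma avg_prod (m : nat) (F : 'I_m -> bool -> R) :
  (2 ^+ m)^-1 * \sum_(b : {ffun 'I_m -> bool}) \prod_i F i (b i)
  = \prod_i ((F i true + F i false) / 2).
Proof.
rewrite -bigA_distr_bigA.
have -> : (2 ^+ m)^-1 = \prod_(i < m) (2 : R)^-1.
  by rewrite prodr_const card_ord exprVn.
rewrite -big_split /=; apply: eq_bigr => i _.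
by rewrite big_bool mulrC.
Qed.

Lemma card_bfun (m : nat) : #|{ffun 'I_m -> bool}| = (2 ^ m)%N.
Proof. by rewrite card_ffun card_bool card_ord. Qed.

Lemma jensen_exp (m : nat) (x : {ffun 'I_m -> bool} -> R) :
  expR ((2 ^+ m)^-1 * \sum_b x b) <= (2 ^+ m)^-1 * \sum_b expR (x b).
Proof.
have [mu emu] : exists mu, mu = (2 ^+ m)^-1 * \sum_b x b by eexists.
rewrite -emu.
have h2 : (0 : R) < 2 ^+ m by rewrite exprn_gt0.
have hb b : expR mu * (1 + (x b - mu)) <= expR (x b).
  have h := expR_ge1Dx (x b - mu).
  have e : expR (x b) = expR mu * expR (x b - mu) by rewrite -expRD addrC subrK.
  by rewrite e ler_pM2l ?expR_gt0.
have hs : \sum_b expR mu * (1 + (x b - mu)) <= \sum_b expR (x b).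
  by apply: ler_sum => b _; exact: hb.
have e : (\sum_b x b) = (2 ^+ m) * mu.
  by rewrite emu mulrA mulfV ?mul1r // gt_eqF.
have e2 : \sum_b expR mu * (1 + (x b - mu)) = expR mu * 2 ^+ m.
  rewrite -mulr_sumr big_split big_split /= sumr_const sumrN sumr_const card_bfun e.
  have tmp (y : R) : y *+ (2 ^ m) = y * 2 ^+ m by rewrite -natrX mulr_natr.
  rewrite !tmp; ring.
rewrite e2 in hs.
rewrite -(ler_pM2l h2) mulrA mulfV ?mul1r ?gt_eqF //.
by rewrite mulrC.
Qed.

Lemma massart (m : nat) (K : finType) (P : {set K}) (a : K -> 'I_m -> R)
  (V L lam : R) (k0 : K) :
  k0 \in P -> (forall k i, k \in P -> `|a k i| <= V) ->
  #|P|%:R <= expR L -> 0 < lam ->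
  lam * ((2 ^+ m)^-1 * \sum_(b : {ffun 'I_m -> bool})
      \big[Num.max/(\sum_i sgnb R (b i) * a k0 i)]_(k in P)
          (\sum_i sgnb R (b i) * a k i))
  <= L + lam ^+ 2 * (2 * m%:R * V ^+ 2).
Proof.
move=> Pk0 aV PL lam0.
set s := fun k (b : {ffun 'I_m -> bool}) => \sum_i sgnb R (b i) * a k i.
rewrite -ler_expR.
have stepA b : expR (lam * \big[Num.max/(s k0 b)]_(k in P) s k b)
    <= \sum_(k in P) expR (lam * s k b).
  have base k : k \in P -> expR (lam * s k b) <= \sum_(k in P) expR (lam * s k b).
    move=> Pk; rewrite (bigD1 k) //= lerDl; apply: sumr_ge0 => *; exact: expR_ge0.
  elim/big_ind: _ => //; first exact: base.
  by move=> x y hx hy; rewrite maxElt; case: ifP.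
rewrite [X in expR X <= _]mulrCA [lam * (\sum_b _)]mulr_sumr.
apply: le_trans (@jensen_exp m (fun b => lam * \big[Num.max/(s k0 b)]_(k in P) s k b)) _.
apply: le_trans (_ : (2 ^+ m)^-1 * \sum_b \sum_(k in P) expR (lam * s k b) <= _).
  rewrite ler_pM2l ?invr_gt0 ?exprn_gt0 //; apply: ler_sum => b _; exact: stepA.
rewrite exchange_big /= mulr_sumr.
have stepC k : k \in P -> (2 ^+ m)^-1 * \sum_b expR (lam * s k b)
    <= expR (m%:R * (2 * lam ^+ 2 * V ^+ 2)).
  move=> Pk.
  have -> : \sum_b expR (lam * s k b)
     = \sum_(b : {ffun 'I_m -> bool}) \prod_i expR (lam * (sgnb R (b i) * a k i)).
    by apply: eq_bigr => b _; rewrite /s mulr_sumr expR_sum.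
  rewrite (@avg_prod m (fun i j => expR (lam * (sgnb R j * a k i)))) expRM_natl.
  have hpc : expR (2 * lam ^+ 2 * V ^+ 2) ^+ m
     = \prod_(i < m) expR (2 * lam ^+ 2 * V ^+ 2) by rewrite prodr_const card_ord.
  rewrite hpc; apply: ler_prod => i _.
  apply/andP; split.
    by apply: divr_ge0; [apply: addr_ge0; exact: expR_ge0|].
  rewrite /sgnb mulN1r mul1r mulrN addrC.
  apply: le_trans (cosh_le _) _; rewrite ler_expR.
  have := aV k i Pk; have := normr_ge0 (a k i).
  move=> h0 h1.
  have V0 : 0 <= V := le_trans h0 h1.
  have h2 : a k i ^+ 2 <= V ^+ 2.
    by rewrite -[a k i ^+ 2](real_normK (num_real _)); apply: lerXn2r; rewrite ?nnegrE.
  rewrite exprMn -mulrA ler_pM2l //; apply: ler_wpM2l; [exact: sqr_ge0|exact: h2].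
apply: le_trans (_ : \sum_(k in P) expR (m%:R * (2 * lam ^+ 2 * V ^+ 2)) <= _).
  by apply: ler_sum => k Pk; exact: stepC.
rewrite sumr_const -[_ *+ #|P|]mulr_natl expRD; apply: ler_pM.
- exact: ler0n.
- exact: expR_ge0.
- exact: PL.
- rewrite (_ : m%:R * (2 * lam ^+ 2 * V ^+ 2) = lam ^+ 2 * (2 * m%:R * V ^+ 2)) //; ring.
Qed.

End Massart.

Section Q.
Variable R : realType.
Local Notation C := (complex R).
Variable n : nat.
Local Notation N := #|qubits n|.
Definition ev : 'I_N -> qubits n := enum_val.
Lemma ev_bij : bijective ev. Proof. exact: enum_val_bij. Qed.
Lemma ev_inj : injective ev. Proof. exact: bij_inj ev_bij. Qed.

Definition mx (A : op R n) : 'M[C]_N := \matrix_(i, j) A (ev i) (ev j).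

Lemma sum_ev (F : qubits n -> C) : \sum_k F k = \sum_(l : 'I_N) F (ev l).
Proof. by rewrite (reindex ev) //; case: ev_bij => g h1 h2; exists g => x _. Qed.

Lemma mx_mul (A B : op R n) : mx (opmul A B) = mx A *m mx B.
Proof.
apply/matrixP => i j; rewrite !mxE /opmul sum_ev.
by apply: eq_bigr => l _; rewrite !mxE.
Qed.

Lemma mx_id : mx (@opid R n) = 1%:M.
Proof. by apply/matrixP => i j; rewrite !mxE /opid (inj_eq ev_inj). Qed.

Lemma mx_scale c (A : op R n) : mx (opscale c A) = c *: mx A.
Proof. by apply/matrixP => i j; rewrite !mxE. Qed.

Lemma mx_trace (A : op R n) : optrace A = \tr (mx A).
Proof. by rewrite /optrace sum_ev /mxtrace; apply: eq_bigr => i _; rewrite mxE. Qed.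


Definition q0 : qubits n := [ffun=> false].
Definition ei (i : 'I_n) : qubits n := [ffun j => j == i].
Definition Zi (i : 'I_n) : op R n := pauli R q0 (ei i).

Lemma bxor0 (v : qubits n) : bxor v q0 = v.
Proof. by apply/ffunP => j; rewrite !ffunE addbF. Qed.

Lemma bdot_ei i (v : qubits n) : bdot (ei i) v = v i.
Proof.
rewrite /bdot (bigD1 i) //= big1 ?addn0 ?ffunE ?eqxx //.
by move=> j /negbTE hj; rewrite ffunE hj.
Qed.

Definition Dop (x : qubits n) (i : 'I_n) : op R n :=
  fun u v => (u == v)%:R * (x i == u i)%:R.

Lemma mx_Dop x i :
  mx (Dop x i) = 2^-1 *: (1%:M + (-1) ^+ (x i) *: mx (Zi i)).
Proof.
apply/matrixP => a b; rewrite !mxE /Dop /Zi /pauli bxor0 bdot_ei (inj_eq (@ev_inj)).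
case: (eqVneq a b) => [->|hab]; rewrite ?eqxx ?mulr1n ?mulr0n ?mul0r ?addr0 ?mulr0 //.
case: (x i); case: (ev b i); rewrite /= ?expr0 ?expr1 ?mulr1 ?mulN1r ?opprK ?subrr ?mulr0 //.
all: by field.
Qed.

Definition Gop (x : qubits n) (l : seq 'I_n) : op R n :=
  fun u v => (u == v)%:R * \prod_(i <- l) (x i == u i)%:R.

Lemma fold_Dop x l :
  foldr (fun i acc => mx (Dop x i) *m acc) 1%:M l = mx (Gop x l).
Proof.
elim: l => [|i l IH] /=.
  rewrite -mx_id; congr mx; apply: funext => u; apply: funext => v.
  by rewrite /Gop big_nil mulr1.
rewrite IH -mx_mul; congr mx; apply: funext => u; apply: funext => v.
rewrite /opmul /Gop /Dop big_cons (bigD1 u) //= [X in _ + X = _]big1 ?addr0.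
  by rewrite eqxx mul1r; case: (u == v); rewrite ?mul1r ?mul0r ?mulr0.
by move=> k hk; rewrite eq_sym (negbTE hk) !mul0r.
Qed.

Lemma Gop_proj x : Gop x (index_enum 'I_n) = Defs.proj R x.
Proof.
apply: funext => u; apply: funext => v; rewrite /Gop /proj.
case: (boolP [forall i, x i == u i]) => [/forallP h | /forallPn [i hi]].
  have xu : u = x by apply/ffunP => i; rewrite (eqP (h i)).
  rewrite big1 ?mulr1; last by move=> j _; rewrite (eqP (h j)) eqxx.
  by rewrite xu /Defs.proj eqxx /= eq_sym.
rewrite (bigD1 i) //= (negbTE hi) mul0r mulr0 /Defs.proj.
have : u != x by apply/eqP => e; rewrite e eqxx in hi.
by move/negbTE ->.
Qed.



Lemma conj_fold (W Wd : 'M[C]_N) (D : 'I_n -> 'M[C]_N) (l : seq 'I_n) :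
  Wd *m W = 1%:M -> W *m Wd = 1%:M ->
  W *m foldr (fun i acc => D i *m acc) 1%:M l *m Wd
  = foldr (fun i acc => (W *m D i *m Wd) *m acc) 1%:M l.
Proof.
move=> h1 h2; elim: l => [|i l IH] /=; first by rewrite mulmx1.
by rewrite -IH !mulmxA -[W *m D i *m Wd *m W]mulmxA h1 mulmx1.
Qed.

Lemma foldr_ext (T U : Type) (f g : T -> U -> U) (x : U) (l : seq T) :
  (forall i acc, f i acc = g i acc) -> foldr f x l = foldr g x l.
Proof. by move=> h; elim: l => //= i l ->. Qed.

Definition Kc := {ffun 'I_n -> qubits n * qubits n * 'I_4}.
Definition Tm (c : Kc) i : 'M[C]_N := 'i ^+ (c i).2 *: mx (pauli R (c i).1.1 (c i).1.2).
Definition Fc (c : Kc) (z : qubits n * qubits n) : R :=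
  complex.Re (\tr (foldr (fun i acc => (2^-1 *: (1%:M + (-1) ^+ (z.1 i) *: Tm c i)) *m acc)
     1%:M (index_enum 'I_n) *m mx (Defs.proj R z.2))).

Lemma clifford_code (U : op R n) : clifford U ->
  exists c : Kc, fPhi (fun rho => opmul (opmul U rho) (opadj U)) = Fc c.
Proof.
case=> [[hU1 hU2] hcl].
have h1 : mx (opadj U) *m mx U = 1%:M by rewrite -mx_mul hU2 mx_id.
have h2 : mx U *m mx (opadj U) = 1%:M by rewrite -mx_mul hU1 mx_id.
have ex i : exists t : qubits n * qubits n * 'I_4,
    opmul (opmul U (Zi i)) (opadj U) = opscale ('i ^+ t.2) (pauli R t.1.1 t.1.2).
  by have [c [d [k e]]] := hcl q0 (ei i); exists (c, d, k).
have [g hg] := fin_all_exists ex.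
exists [ffun i => g i]; apply: funext => z.
have e : forall i (acc : 'M[C]_N), mx U *m (fun i => mx (Dop z.1 i)) i *m mx (opadj U) *m acc =
   (2^-1 *: (1%:M + (-1) ^+ (z.1 i) *: Tm [ffun i => g i] i)) *m acc.
  move=> i acc /=; congr (_ *m _).
  rewrite mx_Dop -scalemxAr -scalemxAl mulmxDr mulmxDl mulmx1 h2.
  by rewrite -scalemxAr -scalemxAl -!mx_mul hg mx_scale /Tm ffunE.
rewrite /fPhi /Fc mx_trace !mx_mul -Gop_proj -fold_Dop.
rewrite (@conj_fold (mx U) (mx (opadj U)) (fun i => mx (Dop z.1 i)) (index_enum 'I_n) h1 h2).
by rewrite (foldr_ext _ _ _ _ _ _ e).
Qed.

End Q.

Lemma nat_nn (R : realType) (n : nat) : (0 : R) <= n%:R * (n%:R - 1).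
Proof. by case: n => [|k]; rewrite ?mul0r // -natr1 addrK mulr_ge0. Qed.

Lemma quad_bound (R : realType) (M L B : R) : 0 <= L -> 0 <= B ->
  (forall lam, 0 < lam -> lam * M <= L + lam ^+ 2 * B) ->
  M <= 0 \/ M ^+ 2 <= 4 * L * B.
Proof.
move=> L0 B0 h; case: (leP M 0) => hM; [by left|right].
have [B00|Bp] := eqVneq B 0.
  have hl : 0 < (L + 1) / M by apply: divr_gt0 => //; lra.
  have := h _ hl; rewrite B00 mulr0 addr0 divfK ?gt_eqF //; lra.
have Bp' : 0 < B by rewrite lt_neqAle eq_sym Bp B0.
have hl : 0 < M / (2 * B) by apply: divr_gt0 => //; lra.
have := h _ hl.
have e : M / (2 * B) * (2 * B) = M by rewrite divfK // gt_eqF //; lra.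
move: e hl; set lam := M / (2 * B) => e hl hi.
rewrite -e; nra.
Qed.

Lemma card_Kc (R : realType) (n : nat) :
  #|Kc n|%:R <= expR (2 * (n%:R ^+ 2 + n%:R) : R).
Proof.
rewrite /Kc card_ffun !card_prod /qubits card_ffun card_bool !card_ord.
have -> : (2 * (n%:R ^+ 2 + n%:R) : R) = (n.+1 * n)%:R * 2.
  by rewrite natrM mulrC -natr1; ring.
rewrite expRM_natl.
have -> : ((2 ^ n * 2 ^ n * 4) ^ n)%N = (4 ^ (n.+1 * n))%N.
  by rewrite -expnMn mulnC -expnS expnM.
rewrite natrX; apply: lerXn2r; rewrite ?nnegrE ?expR_ge0 //.
have h1 := expR_ge1Dx (1 : R).
have -> : (2 : R) = 1 + 1 by [].
rewrite expRD; nra.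
Qed.

Theorem mainTheorem6 (R : realType) :
  exists eta : nat -> R,
    eta @ \oo --> 0 /\
    forall (n m : nat) (S : 'I_m -> qubits n * qubits n), (0 < m)%N ->
      empRad S (Fset (@STAB R n)) <=
        4 * ((1 + eta n) * n%:R / Num.sqrt m%:R) *
        sup [set vinf S (fPhi Phi) | Phi in @STAB R n].
Proof.
exists (@harmonic R); split; first exact: cvg_harmonic.
move=> n m S m0.
pose P : {set Kc n} :=
  finset (fun k => `[< exists Phi, @STAB R n Phi /\ fPhi Phi = @Fc R n k >]).
have hP Phi : @STAB R n Phi -> exists k, k \in P /\ fPhi Phi = @Fc R n k.
  move=> sPhi; have [U [hU eP]] := sPhi.
  have [c hc] := @clifford_code R n U hU.
  exists c; split; last by rewrite eP.
  by rewrite inE; apply/asboolP; exists Phi; split => //; rewrite eP.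
have hP' k : k \in P -> exists Phi, @STAB R n Phi /\ fPhi Phi = @Fc R n k.
  by rewrite inE => /asboolP.
case: (set_0Vmem P) => [P0 | [k0 Pk0]].
  have E1 b : [set (m%:R^-1 * \sum_i sgnb R (b i) * g (S i)) | g in Fset (@STAB R n)]
      = set0.
    apply/seteqP; split => x //= [g [Phi sPhi _] _].
    by have [k [Pk _]] := hP Phi sPhi; rewrite P0 inE in Pk.
  have E2 : [set vinf S (fPhi Phi) | Phi in @STAB R n] = set0.
    apply/seteqP; split => x //= [Phi sPhi _].
    by have [k [Pk _]] := hP Phi sPhi; rewrite P0 inE in Pk.
  rewrite /empRad E2 sup0 mulr0 big1 ?mulr0 // => b _.
  by rewrite E1 sup0.
pose a k i := @Fc R n k (S i).
pose Vset := [set vinf S (fPhi Phi) | Phi in @STAB R n].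
have hsupV : has_sup Vset.
  split.
    have [Phi [sPhi _]] := hP' k0 Pk0; by exists (vinf S (fPhi Phi)); exists Phi.
  exists (\sum_(k : Kc n) `|vinf S (@Fc R n k)|) => x [Phi sPhi <-].
  have [k [Pk ->]] := hP Phi sPhi.
  apply: le_trans (ler_norm _) _; rewrite (bigD1 k) //= lerDl.
  by apply: sumr_ge0 => *.
set V := sup Vset.
have hV k : k \in P -> vinf S (@Fc R n k) <= V.
  move=> Pk; have [Phi [sPhi e]] := hP' k Pk.
  by apply: sup_upper_bound => //; exists Phi; rewrite ?e.
have haV k i : k \in P -> `|a k i| <= V.
  move=> Pk; apply: le_trans (hV k Pk); rewrite /vinf /a.
  exact: le_bigmax.
have V0 : 0 <= V := le_trans (normr_ge0 _) (haV k0 (Ordinal m0) Pk0).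
pose M := (2 ^+ m)^-1 * \sum_(b : {ffun 'I_m -> bool})
      \big[Num.max/(\sum_i sgnb R (b i) * a k0 i)]_(k in P)
          (\sum_i sgnb R (b i) * a k i).
have hm : (0 : R) < m%:R by rewrite ltr0n.
have hemp : empRad S (Fset (@STAB R n)) <= m%:R^-1 * M.
  rewrite /empRad /M mulrCA; apply: ler_wpM2l; first by rewrite invr_ge0 exprn_ge0.
  rewrite mulr_sumr; apply: ler_sum => b _.
  apply: ge_sup.
    have [Phi [sPhi e]] := hP' k0 Pk0.
    by exists (m%:R^-1 * \sum_i sgnb R (b i) * @Fc R n k0 (S i)); exists (@Fc R n k0);
      first by exists Phi.
  move=> x [g [Phi sPhi <-] <-].
  have [k [Pk ->]] := hP Phi sPhi.
  apply: ler_wpM2l; first by rewrite invr_ge0 ltW.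
  exact: le_bigmax_cond.
pose L : R := 2 * (n%:R ^+ 2 + n%:R).
have hcard : #|P|%:R <= expR L.
  apply: le_trans (card_Kc R n); rewrite ler_nat; exact: max_card.
have hmass lam : 0 < lam -> lam * M <= L + lam ^+ 2 * (2 * m%:R * V ^+ 2).
  by move=> lam0; exact: (@massart R m (Kc n) P a V L lam k0 Pk0 haV hcard lam0).
have L0 : 0 <= L by rewrite /L; apply: mulr_ge0 => //; apply: addr_ge0.
have B0 : 0 <= 2 * m%:R * V ^+ 2 by apply: mulr_ge0; [apply: mulr_ge0|apply: sqr_ge0].
have hq := @quad_bound R M L _ L0 B0 hmass.
apply: le_trans hemp _.
set s := Num.sqrt m%:R.
have hs0 : 0 < s by rewrite sqrtr_gt0.
have hss : s ^+ 2 = m%:R by rewrite sqr_sqrtr // ltW.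
have [h hh'] : exists h, h = @harmonic R n by eexists.
rewrite -hh'.
have hh : h = n.+1%:R^-1 by rewrite hh'.
have h0 : 0 <= h by rewrite hh invr_ge0.
have hn1 : h * (n%:R + 1) = 1 by rewrite hh -natr1 mulVf // -natr1 pnatr_eq0.
have nn := @nat_nn R n.
have n0 : (0 : R) <= n%:R by [].
have key : M <= 4 * (1 + h) * n%:R * V * s.
  have T0 : 0 <= 4 * (1 + h) * n%:R * V * s.
    apply: mulr_ge0; last exact: ltW.
    apply: mulr_ge0; last exact: V0.
    apply: mulr_ge0; last exact: n0.
    apply: mulr_ge0 => //; lra.
  case: hq => [hM|hM]; first exact: le_trans hM T0.
  have q1 : n%:R ^+ 2 + n%:R <= (1 + h) ^+ 2 * n%:R ^+ 2 by nra.
  have q2 : M ^+ 2 <= (4 * (1 + h) * n%:R * V * s) ^+ 2.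
    apply: le_trans hM _; rewrite /L.
    have -> : (4 * (1 + h) * n%:R * V * s) ^+ 2
       = 16 * ((1 + h) ^+ 2 * n%:R ^+ 2) * (V ^+ 2 * s ^+ 2) by ring.
    rewrite hss.
    have -> : 4 * (2 * (n%:R ^+ 2 + n%:R)) * (2 * m%:R * V ^+ 2)
       = 16 * (n%:R ^+ 2 + n%:R) * (V ^+ 2 * m%:R) by ring.
    apply: ler_wpM2r; first by apply: mulr_ge0 => //; apply: sqr_ge0.
    by apply: ler_wpM2l.
  nra.
have hmi : (0 : R) <= m%:R^-1 by rewrite invr_ge0 ltW.
apply: le_trans (ler_wpM2l hmi key) _.
rewrite -hss.
have -> : (s ^+ 2)^-1 * (4 * (1 + h) * n%:R * V * s) = 4 * ((1 + h) * n%:R / s) * V.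
  by field; rewrite gt_eqF.
by [].
Qed.
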